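(* Let $m\geq 0$ and $k\geq 1$ be integers and let $n$ be a nonnegative integer with $n\geq t(m,k)$, where \[ t(m,k)= m\left(\left\lfloor \frac{m}{k}\right\rfloor +1\right)k-\binom{\lfloor m/k\rfloor +1}{2}k^2 . \] Then $b(n,k)\geq m$.
   Context: For a cell $u$ of the Young diagram of a partition $\lambda$, the hook length of $u$ is the number of cells $v$ of the diagram with $v=u$, or $v$ below $u$ in the same column, or $v$ to the right of $u$ in the same row. $\alpha_k(\lambda)$ is the number of cells of the Young diagram of $\lambda$ with hook length exactly $k$. $P(n)$ is the set of partitions of $n$ (with $P(0)$ containing only the empty partition), and $b(n,k)=\max\{\alpha_k(\lambda)\colon\lambda\in P(n)\}$. *)

(* Defs.v *)
From mathcomp Require Import all_boot.
Set Implicit Arguments. Unset Strict Implicit. Unset Printing Implicit Defensive.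

(* A partition is represented by its list of parts (rows of the Young diagram,
   top to bottom), weakly decreasing and all positive. *)
Definition is_partition (n : nat) (la : seq nat) : bool :=
  [&& sorted geq la, all (fun x => 0 < x) la & sumn la == n].

Definition conj_part (la : seq nat) (j : nat) : nat := count (fun x => j < x) la.

(* hook length of cell (i, j) (0-indexed row i, column j, with j < la_i):
   arm (cells to the right) + leg (cells below) + 1 *)
Definition hook (la : seq nat) (i j : nat) : nat :=
  (nth 0 la i - j.+1) + (conj_part la j - i.+1) + 1.

Definition alpha (k : nat) (la : seq nat) : nat :=
  \sum_(i < size la) \sum_(j < nth 0 la i) (hook la i j == k).

(* Finite encoding of P(n): a function f : 'I_n -> 'I_(n.+1) whose values,
   read in order, are weakly decreasing and sum to n; the partition is the
   list of nonzero values.  Every partition of n has at most n parts, each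
   at most n, so this enumerates exactly P(n). *)
Definition part_of (n : nat) (f : {ffun 'I_n -> 'I_n.+1}) : seq nat :=
  [seq x <- [seq nat_of_ord (f i) | i <- enum 'I_n] | 0 < x].

Definition enc_ok (n : nat) (f : {ffun 'I_n -> 'I_n.+1}) : bool :=
  is_partition n (part_of f) &&
  sorted geq [seq nat_of_ord (f i) | i <- enum 'I_n].

Definition b (n k : nat) : nat :=
  \max_(f : {ffun 'I_n -> 'I_n.+1} | enc_ok f) alpha k (part_of f).

Definition t (m k : nat) : nat :=
  m * (m %/ k).+1 * k - 'C((m %/ k).+1, 2) * k ^ 2.

(* Main.v *)
Require Import Defs.
From mathcomp Require Import all_boot zify.
Set Implicit Arguments. Unset Strict Implicit. Unset Printing Implicit Defensive.

Definition cnt (k : nat) (la : seq nat) (i : nat) : nat :=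
  \sum_(j < nth 0 la i) (hook la i j == k).

Lemma alphaE k la : alpha k la = \sum_(i < size la) cnt k la i.
Proof. by []. Qed.

Lemma cnt_ge1 k la i j : j < nth 0 la i -> hook la i j = k -> 0 < cnt k la i.
Proof.
move=> hj hk; rewrite /cnt (bigD1 (Ordinal hj)) //= hk eqxx.
by rewrite add1n.
Qed.

Lemma hook_top x la i j : all (fun y => y <= x) la -> j < nth 0 la i ->
  hook (x :: la) i.+1 j = hook la i j.
Proof.
move=> hall hj.
have hi : i < size la by rewrite ltnNge; apply/negP => h; move: hj; rewrite nth_default.
have hx : j < x.
  apply: (leq_trans hj); exact: (allP hall _ (mem_nth 0 hi)).
by rewrite /hook /conj_part /= hx add1n subSS.
Qed.

Lemma top_hook x la j : j < x -> hook (x :: la) 0 j = x - j + conj_part la j.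
Proof. move=> hj; rewrite /hook /conj_part /= hj; lia. Qed.

Lemma alpha_top k x la : all (fun y => y <= x) la ->
  alpha k (x :: la) = cnt k (x :: la) 0 + alpha k la.
Proof.
move=> hall; rewrite !alphaE /= big_ord_recl; congr (_ + _).
apply: eq_bigr => i _; rewrite /cnt /=.
apply: eq_bigr => j _; by rewrite hook_top.
Qed.

Lemma alpha_top_ge k x la j : all (fun y => y <= x) la -> j < x ->
  x - j + conj_part la j = k -> (alpha k la).+1 <= alpha k (x :: la).
Proof.
move=> hall hj hk; rewrite alpha_top // -add1n leq_add2r.
apply: (@cnt_ge1 _ _ _ j) => //; by rewrite top_hook.
Qed.

Lemma alpha_shift k a l0 tau mu :
  (forall j, count (fun x => j + a < x) mu = count (fun x => j < x) tau) ->
  (forall x y, x \in l0 -> y \in mu -> y <= a + x) ->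
  \sum_(i < size l0) cnt k (l0 ++ tau) i + alpha k mu
    <= alpha k (map (addn a) l0 ++ mu).
Proof.
move=> H1 H2; rewrite [alpha k (_ ++ _)]alphaE size_cat size_map big_split_ord /=.
apply: leq_add.
  apply: leq_sum => i _.
  have hi := ltn_ord i.
  have en : nth 0 (map (addn a) l0 ++ mu) i = a + nth 0 (l0 ++ tau) i.
    by rewrite !nth_cat size_map hi (nth_map 0).
  rewrite /cnt en big_split_ord /= -[X in X <= _]add0n leq_add //.
  apply: eq_leq; apply: eq_bigr => -[j _] _ /=.
  congr (_ == k); rewrite /hook en /conj_part [in RHS]count_cat count_map.
  rewrite count_cat (addnC a j) H1.
  have -> : count (preim (addn a) (fun x => j + a < x)) l0 = count (fun x => j < x) l0.
    by apply: eq_count => y /=; rewrite addnC ltn_add2l.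
  by rewrite (addnC j a) -addnS subnDl.
apply: eq_leq; apply: eq_bigr => -[p hp] _ /=.
have en : nth 0 (map (addn a) l0 ++ mu) (size l0 + p) = nth 0 mu p.
  by rewrite nth_cat size_map ltnNge leq_addr /= addKn.
rewrite /cnt /= en; apply: eq_bigr => -[j hj] _ /=.
congr (_ == k); rewrite /hook en /conj_part count_cat count_map.
have -> : count (preim (addn a) (fun x => j < x)) l0 = size l0.
  rewrite -count_predT; apply: eq_in_count => y hy /=.
  apply: (leq_trans hj); apply: H2 => //; exact: mem_nth.
by rewrite -addnS subnDl.
Qed.

Lemma conj_nseq j n x : conj_part (nseq n x) j = (j < x) * n.
Proof. by rewrite /conj_part count_nseq. Qed.

Lemma all_nseq_le x n y : y <= x -> all (fun z => z <= x) (nseq n y).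
Proof. move=> h; rewrite all_nseq h; exact: orbT. Qed.

Lemma rect_alpha k w s : k <= w -> s <= k -> s <= alpha k (nseq s w).
Proof.
move=> hw; elim: s => [|s IH] hs //=.
apply: leq_trans (alpha_top_ge (j := w + s - k) _ _ _).
- have := IH ltac:(lia); lia.
- exact: all_nseq_le.
- lia.
rewrite conj_nseq; have -> : (w + s - k < w) = true by lia.
lia.
Qed.

Lemma nu_alpha k w p s : k <= w -> p + s < k ->
  p + s <= alpha k (nseq p w.+1 ++ nseq s w).
Proof.
move=> hw; elim: p => [|p IH] hs /=.
  by rewrite add0n rect_alpha // ltnW.
apply: leq_trans (alpha_top_ge (j := w.+1 + p + s - k) _ _ _).
- have := IH ltac:(lia); lia.
- rewrite all_cat; apply/andP; split; apply: all_nseq_le => //.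
- lia.
rewrite /conj_part count_cat !count_nseq.
have -> : (w.+1 + p + s - k < w.+1) = true by lia.
have -> : (w.+1 + p + s - k < w) = true by lia.
lia.
Qed.

Lemma baseB_alpha k e : 0 < k -> (e = 0) \/ (k <= e) ->
  k <= alpha k ((k + e) :: nseq k.-1 k).
Proof.
move=> hk he.
have h1 : k.-1 <= alpha k (nseq k.-1 k) by apply: rect_alpha => //; lia.
case: he => [->|he].
  apply: leq_trans (alpha_top_ge (j := k.-1) _ _ _).
  - lia.
  - exact: all_nseq_le (leq_addr _ _).
  - lia.
  rewrite conj_nseq; have -> : (k.-1 < k) = true by lia.
  lia.
apply: leq_trans (alpha_top_ge (j := e) _ _ _).
- lia.
- exact: all_nseq_le (leq_addr _ _).
- lia.
rewrite conj_nseq; have -> : (e < k) = false by lia.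
lia.
Qed.

Lemma beta1_alpha k e p : e < k -> p <= e -> p <= alpha k (nseq p k.-1 ++ [:: e]).
Proof.
move=> hek; elim: p => [|p IH] hp //=.
apply: leq_trans (alpha_top_ge (j := p) _ _ _).
- have := IH ltac:(lia); lia.
- rewrite all_cat; apply/andP; split; first exact: all_nseq_le.
  by rewrite /= andbT; lia.
- lia.
rewrite /conj_part count_cat count_nseq /=.
have -> : (p < k.-1) = true by lia.
have -> : (p < e) = true by lia.
lia.
Qed.

Lemma beta2_alpha k e p : 0 < e -> e < k -> p <= k.-1 - e ->
  e + p <= alpha k (nseq p k ++ nseq e k.-1 ++ [:: e]).
Proof.
move=> he0 hek; elim: p => [|p IH] hp /=.
  by rewrite addn0 beta1_alpha.
apply: leq_trans (alpha_top_ge (j := p + e) _ _ _).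
- have := IH ltac:(lia); lia.
- rewrite !all_cat; apply/and3P; split; try apply: all_nseq_le => //; first lia.
  by rewrite /= andbT; lia.
- lia.
rewrite /conj_part !count_cat !count_nseq /=.
have -> : (p + e < k) = true by lia.
have -> : (p + e < k.-1) = true by lia.
have -> : (p + e < e) = false by lia.
lia.
Qed.

Definition gam k e := (k + e) :: (nseq (k.-1 - e) k ++ nseq e k.-1).
Definition beta k e := (k + e) :: (nseq (k.-1 - e) k ++ nseq e k.-1 ++ [:: e]).

Lemma beta_alpha k e : 0 < e -> e < k -> k <= alpha k (beta k e).
Proof.
move=> he0 hek.
have h := @beta2_alpha k e (k.-1 - e) he0 hek (leqnn _).
apply: leq_trans (alpha_top_ge (j := k.-1) _ _ _).
- lia.
- rewrite !all_cat; apply/and3P; split; try apply: all_nseq_le => //; try lia.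
  by rewrite /= andbT; lia.
- lia.
rewrite /conj_part !count_cat !count_nseq /=.
have -> : (k.-1 < k) = true by lia.
have -> : (k.-1 < k.-1) = false by lia.
have -> : (k.-1 < e) = false by lia.
lia.
Qed.

Lemma pw_nseq n x : pairwise geq (nseq n x).
Proof. elim: n => //= n ->; rewrite andbT; exact: all_nseq_le. Qed.

Lemma pw_cat (l1 l2 : seq nat) : pairwise geq l1 -> pairwise geq l2 ->
  (forall x y, x \in l1 -> y \in l2 -> y <= x) -> pairwise geq (l1 ++ l2).
Proof.
move=> h1 h2 h; rewrite pairwise_cat; apply/and3P; split => //.
by apply/allrelP => x y hx hy; apply: h.
Qed.

Lemma pw_map a (l : seq nat) : pairwise geq l -> pairwise geq (map (addn a) l).
Proof.
move=> h; rewrite pairwise_map; apply: sub_pairwise h => x y /=.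
by rewrite leq_add2l.
Qed.

Lemma sumn_map_add a l : sumn (map (addn a) l) = a * size l + sumn l.
Proof. elim: l => [|x l IH] /=; [by rewrite muln0 | rewrite IH; lia]. Qed.

Lemma c2S q : 'C(q.+2, 2) = 'C(q.+1, 2) + q.+1.
Proof. by rewrite binS bin1. Qed.

Definition stepS k (l : seq nat) := map (addn k) l ++ nseq k k.
Definition iterS k q l := iter q (stepS k) l.

Lemma alpha_stepS k l : 0 < k -> alpha k l + k <= alpha k (stepS k l).
Proof.
move=> hk.
have := @alpha_shift k k l [::] (nseq k k).
rewrite cats0 -alphaE; move=> h; apply: leq_trans (h _ _).
- by rewrite leq_add2l rect_alpha.
- move=> j; rewrite count_nseq /=; have -> : (j + k < k) = false by lia.
  by [].
- by move=> x y _; rewrite mem_nseq => /andP [_ /eqP ->]; apply: leq_addr.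
Qed.

Lemma alpha_iterS k q l : 0 < k -> alpha k l + q * k <= alpha k (iterS k q l).
Proof.
move=> hk; elim: q => [|q IH] /=; first by rewrite addn0.
apply: leq_trans (alpha_stepS _ hk); rewrite mulSn; move: IH; rewrite /iterS; lia.
Qed.

Lemma size_iterS k q l : size (iterS k q l) = size l + q * k.
Proof.
elim: q => [|q IH] /=; first by rewrite addn0.
by rewrite /stepS size_cat size_map size_nseq IH mulSn; lia.
Qed.

Lemma sumn_iterS k q l :
  sumn (iterS k q l) = sumn l + q * k * size l + k * k * 'C(q.+1, 2).
Proof.
elim: q => [|q IH] /=; first by rewrite bin_small //; lia.
rewrite /stepS sumn_cat sumn_map_add sumn_nseq.
have := size_iterS k q l; rewrite /iterS => ->.
rewrite /iterS in IH; rewrite IH c2S; nia.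
Qed.

Lemma pw_iterS k q l : pairwise geq l -> pairwise geq (iterS k q l).
Proof.
move=> h; elim: q => [|q IH] //=.
apply: pw_cat; [exact: pw_map | exact: pw_nseq |].
move=> x y /mapP [z _ ->]; rewrite mem_nseq => /andP [_ /eqP ->].
exact: leq_addr.
Qed.

Lemma pos_iterS k q l : 0 < k -> all (fun x => 0 < x) l ->
  all (fun x => 0 < x) (iterS k q l).
Proof.
move=> hk h; elim: q => [|q IH] //=.
rewrite all_cat all_map all_nseq hk orbT andbT.
by apply/allP => x _ /=; rewrite addn_gt0 hk.
Qed.

Definition stepF k e (l : seq nat) := map (addn k) l ++ gam k e.
Definition lF k e q := iter q (stepF k e) [::].

Lemma size_gam k e : 0 < k -> e < k -> size (gam k e) = k.
Proof. move=> hk he; rewrite /= size_cat !size_nseq; lia. Qed.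

Lemma sumn_gam k e : 0 < k -> e < k -> sumn (gam k e) = k * k.
Proof.
move=> hk he; rewrite /= sumn_cat !sumn_nseq.
have [f ->] : exists f, k = e + f.+1 by exists (k - e).-1; lia.
have -> : (e + f.+1).-1 - e = f by lia.
have -> : (e + f.+1).-1 = e + f by lia.
nia.
Qed.

Lemma size_lF k e q : 0 < k -> e < k -> size (lF k e q) = q * k.
Proof.
move=> hk he; elim: q => [|q IH] //=.
by rewrite /stepF size_cat size_map size_gam // -/(lF k e q) IH mulSn addnC.
Qed.

Lemma sumn_lF k e q : 0 < k -> e < k -> sumn (lF k e q) = k * k * 'C(q.+1, 2).
Proof.
move=> hk he; elim: q => [|q IH] /=; first by rewrite bin_small //; lia.
rewrite /stepF sumn_cat sumn_map_add sumn_gam // -/(lF k e q) IH size_lF // c2S.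
nia.
Qed.

Lemma gam_le k e x : e < k -> x \in gam k e -> (e <= x) && (x <= k + e).
Proof.
move=> he; rewrite /gam inE mem_cat !mem_nseq => /or3P [/eqP ->| /andP [h /eqP ->]| /andP[h /eqP ->]];
  lia.
Qed.

Lemma lF_ge k e q : 0 < k -> e < k -> all (fun x => e <= x) (lF k e q).
Proof.
move=> hk he; elim: q => [|q IH] //=.
rewrite all_cat -/(lF k e q); apply/andP; split.
  by rewrite all_map; apply: sub_all IH => x /=; lia.
by apply/allP => x /(gam_le he) /andP [].
Qed.

Lemma pw_gam k e : e < k -> pairwise geq (gam k e).
Proof.
move=> he; rewrite /gam -cat1s; apply: pw_cat => //.
  apply: pw_cat; try apply: pw_nseq.
  move=> x y; rewrite !mem_nseq => /andP [_ /eqP ->] /andP [_ /eqP ->]; lia.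
move=> x y; rewrite inE => /eqP ->; rewrite mem_cat !mem_nseq.
case/orP => /andP [_ /eqP ->]; lia.
Qed.

Lemma pw_lF k e q : 0 < k -> e < k -> pairwise geq (lF k e q).
Proof.
move=> hk he; elim: q => [|q IH] //=.
rewrite /stepF -/(lF k e q); apply: pw_cat; [exact: pw_map | exact: pw_gam |].
move=> x y /mapP [z hz ->] /(gam_le he) /andP [_ h].
have := allP (lF_ge q hk he) z hz => /= h2; lia.
Qed.

Lemma cnt_last k e l : e < k -> cnt k (l ++ [:: e]) (size l) = 0.
Proof.
move=> he; rewrite /cnt.
have en : nth 0 (l ++ [:: e]) (size l) = e by rewrite nth_cat ltnn subnn.
rewrite en; apply: big1 => -[j hj] _ /=.
have hc : conj_part (l ++ [:: e]) j <= (size l).+1.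
  by apply: leq_trans (count_size _ _) _; rewrite size_cat addn1.
apply/eqP; rewrite /hook en; lia.
Qed.

Lemma alpha_lastE k e l : e < k ->
  alpha k (l ++ [:: e]) = \sum_(i < size l) cnt k (l ++ [:: e]) i.
Proof.
move=> he; rewrite alphaE size_cat /= addn1 big_ord_recr /= cnt_last //.
by rewrite addn0.
Qed.

Lemma alpha_lF k e q : 0 < e -> e < k ->
  q * k <= alpha k (lF k e q ++ [:: e]).
Proof.
move=> he0 hek; have hk : 0 < k by lia.
elim: q => [|q IH] //=.
rewrite /stepF -/(lF k e q) -catA.
have -> : gam k e ++ [:: e] = beta k e by rewrite /gam /beta /= -catA.
have := @alpha_shift k k (lF k e q) [:: e] (beta k e).
rewrite -alpha_lastE // => h; apply: leq_trans (h _ _).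
- by rewrite mulSn addnC leq_add // beta_alpha.
- move=> j; rewrite /beta /= !count_cat !count_nseq /=.
  have -> : (j + k < k + e) = (j < e) by lia.
  have -> : (j + k < k) = false by lia.
  have -> : (j + k < k.-1) = false by lia.
  have -> : (j + k < e) = false by lia.
  lia.
- move=> x y hx hy.
  have := allP (lF_ge q hk hek) x hx => /= h2.
  move: hy; rewrite /beta inE mem_cat mem_cat !mem_nseq inE.
  case/or4P => [/eqP ->| /andP [_ /eqP ->]| /andP [_ /eqP ->]| /eqP ->]; lia.
Qed.

Lemma geq_trans : transitive geq.
Proof. move=> y x z h1 h2 /=; exact: leq_trans h2 h1. Qed.

Lemma size_le_sumn (la : seq nat) : all (fun x => 0 < x) la -> size la <= sumn la.
Proof. elim: la => //= x l IH /andP [hx hl]; have := IH hl; lia. Qed.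

Lemma nth_le_sumn (la : seq nat) i : nth 0 la i <= sumn la.
Proof.
elim: la i => [|x l IH] [|i] //=; first exact: leq_addr.
apply: leq_trans (IH i) _; exact: leq_addl.
Qed.

Lemma map_const0 (s : seq nat) : [seq 0 | _ <- s] = nseq (size s) 0.
Proof. by elim: s => //= x s ->. Qed.

Lemma enc k n la : is_partition n la -> alpha k la <= b n k.
Proof.
move=> hpa; have := hpa; move/and3P => [hs hp /eqP hsum].
have hsz : size la <= n by rewrite -hsum size_le_sumn.
pose f : {ffun 'I_n -> 'I_n.+1} := [ffun i : 'I_n => (inord (nth 0 la i) : 'I_n.+1)].
have hseq : [seq nat_of_ord (f i) | i <- enum 'I_n] = la ++ nseq (n - size la) 0.
  transitivity [seq nth 0 la i | i <- iota 0 n].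
    rewrite -val_enum_ord -map_comp; apply: eq_map => i /=.
    rewrite ffunE inordK // ltnS; apply: leq_trans (nth_le_sumn la i) _.
    by rewrite hsum.
  rewrite -(subnKC hsz) iotaD map_cat map_nth_iota0 // take_size add0n.
  congr (_ ++ _).
  rewrite addKn -{2}(size_iota (size la) (n - size la)) -map_const0.
  apply/eq_in_map => i; rewrite mem_iota => /andP [h _].
  by rewrite nth_default.
have hpart : part_of f = la.
  rewrite /part_of hseq filter_cat (all_filterP hp) filter_nseq /=.
  by rewrite cats0.
have hok : enc_ok f.
  rewrite /enc_ok hpart hpa /= hseq sorted_pairwise; last exact: geq_trans.
  apply: pw_cat => //; first by rewrite -sorted_pairwise //; exact: geq_trans.
    exact: pw_nseq.
  by move=> x y _; rewrite mem_nseq => /andP [_ /eqP ->].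
rewrite /b -hpart.
exact: (leq_bigmax_cond f hok).
Qed.

Lemma c2E q : 'C(q.+1, 2) * 2 = q.+1 * q.
Proof. elim: q => [|q IH]; first by rewrite bin_small. rewrite c2S; nia. Qed.

Theorem theorem4p2 (m k n : nat) (hk : 1 <= k) (hn : t m k <= n) : m <= b n k.
Proof.
have [->|m0] := posnP m; first exact: leq0n.
set Q := m %/ k; set R := m %% k.
have hm : m = Q * k + R by rewrite /Q /R -divn_eq.
have hR : R < k by rewrite /R ltn_pmod.
have hC := c2E Q.
have tE : t m k = k * k * 'C(Q.+1, 2) + R * Q.+1 * k.
  rewrite /t -/Q -mulnn hm; nia.
set e := n - t m k.
have hne : n = t m k + e by rewrite /e subnKC.
have [R0|Rpos] := posnP R.
  have [Q' hQ] : exists Q', Q = Q'.+1 by exists Q.-1; nia.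
  have hC' := c2S Q'.
  rewrite -hQ in hC'.
  have [hB|hB] : ((e = 0) \/ (k <= e)) \/ (0 < e < k) by lia.
  - apply: leq_trans (@enc k n (iterS k Q' ((k + e) :: nseq k.-1 k)) _).
      apply: leq_trans (@alpha_iterS k Q' _ hk).
      have := baseB_alpha hk hB; lia.
    apply/and3P; split.
    + rewrite sorted_pairwise; last exact: geq_trans.
      apply: pw_iterS; rewrite -cat1s; apply: pw_cat => //; first exact: pw_nseq.
      move=> x y; rewrite inE mem_nseq => /eqP -> /andP [_ /eqP ->]; exact: leq_addr.
    + apply: pos_iterS => //=; rewrite all_nseq hk orbT andbT; lia.
    + apply/eqP; rewrite sumn_iterS /= sumn_nseq size_nseq hne tE R0.
      have hk1 : k.-1.+1 = k by lia.
      rewrite hk1 hC' hQ mul0n addn0; set C := 'C(Q'.+1, 2).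
      have hkk : k + k * k.-1 = k * k by rewrite -{1}(muln1 k) -mulnDr add1n hk1.
      rewrite mulnDr mulnS; move: hkk; nia.
  - apply: leq_trans (@enc k n (lF k e Q ++ [:: e]) _).
      have := @alpha_lF k e Q ltac:(lia) ltac:(lia); lia.
    have hge := @lF_ge k e Q hk ltac:(lia).
    apply/and3P; split.
    + rewrite sorted_pairwise; last exact: geq_trans.
      apply: pw_cat => //; first exact: (@pw_lF k e Q hk ltac:(lia)).
      move=> x y hx; rewrite inE => /eqP ->; exact: (allP hge).
    + rewrite all_cat /= andbT; apply/andP; split; last lia.
      by apply: sub_all hge => x /=; lia.
    + apply/eqP; rewrite sumn_cat sumn_lF //=; last lia.
      by rewrite addn0 hne tE R0 mul0n addn0.
set c := e %/ R; set d := e %% R; set w := k + c.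
have hd : d < R by rewrite /d ltn_pmod.
have he : e = c * R + d by rewrite /c /d -divn_eq.
have hw : k <= w by rewrite /w leq_addr.
set base := nseq d w.+1 ++ nseq (R - d) w.
apply: leq_trans (@enc k n (iterS k Q base) _).
  apply: leq_trans (@alpha_iterS k Q _ hk).
  rewrite /base; have := @nu_alpha k w d (R - d) hw ltac:(lia); lia.
apply/and3P; split.
- rewrite sorted_pairwise; last exact: geq_trans.
  apply: pw_iterS; apply: pw_cat; try exact: pw_nseq.
  by move=> x y; rewrite !mem_nseq => /andP [_ /eqP ->] /andP [_ /eqP ->].
- apply: pos_iterS => //; rewrite all_cat !all_nseq.
  apply/andP; split; apply/orP; right; lia.
- apply/eqP; rewrite sumn_iterS /base sumn_cat !sumn_nseq size_cat !size_nseq.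
  rewrite hne tE he.
  have -> : d + (R - d) = R by lia.
  have hR' : R = d + (R - d) by lia.
  rewrite /w; move: (R - d) hR' => s hs.
  move: (k * k * 'C(Q.+1, 2)) => C.
  clear base; clearbody w c d R; subst R; nia.
Qed.
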